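(* Let $a,a^\dagger$ be the annihilation and creation operators of the harmonic oscillator, $[a,a^\dagger]=1$, with vacuum $|0\rangle$ ($a|0\rangle=0$, $\langle0|a^\dagger=0$). For positive integers $n$ let $A_n^\dagger$ act on the formal span of $\{(a^\dagger)^m|0\rangle\}_{m\ge0}$ by $A_n^\dagger(a^\dagger)^m|0\rangle=\frac{m!}{(mn)!}(a^\dagger)^{mn}|0\rangle$, and let $A_n$ act from the right on the formal span of $\{\langle0|a^m\}_{m\ge0}$ by $\langle0|a^mA_n=\langle0|a^{mn}$. Then, with the infinite products over primes understood as formal series, $$\Big(\prod_{p\text{ prime}}\frac{1}{1-A_p^\dagger}\Big)a^\dagger|0\rangle=\sum_{n\ge1}\frac{1}{n!}(a^\dagger)^n|0\rangle,\qquad \prod_{p\text{ prime}}(1-A_p^\dagger)\sum_{n\ge1}\frac{1}{n!}(a^\dagger)^n|0\rangle=a^\dagger|0\rangle,$$ $$\langle0|a\Big(\prod_{p\text{ prime}}\frac{1}{1-A_p}\Big)=\sum_{n\ge1}\langle0|a^n,\qquad \sum_{n\ge1}\langle0|a^n\prod_{p\text{ prime}}(1-A_p)=\langle0|a.$$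
   Context: Since the $A_p^\dagger$ commute, $\frac{1}{1-A_p^\dagger}:=\sum_{k\ge0}(A_p^\dagger)^k$ and infinite products over primes are expanded formally as sums of monomials in the $A_p^\dagger$; applied to the vectors above, each coefficient of $(a^\dagger)^N|0\rangle$ ($N\ge1$) receives only finitely many contributions, and the result is interpreted coefficientwise in the formal space $\mathbb C[[a^\dagger]]|0\rangle$. The same conventions apply to the $A_p$ acting on bras. *)

(* Defs.v *)
From mathcomp Require Import all_boot all_order all_algebra.
Set Implicit Arguments. Unset Strict Implicit. Unset Printing Implicit Defensive.
Import Order.TTheory GRing.Theory Num.Theory.
Local Open Scope ring_scope.

(* A formal ket  sum_m c m (a^dag)^m |0>  is its coefficient function
   c : nat -> R (element of R[[a^dag]]|0>); a formal bra
   sum_m c m <0| a^m  is likewise c : nat -> R. *)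

(* A_n^dag (a^dag)^m|0> = m!/(mn)! (a^dag)^(mn)|0>, extended coefficientwise:
   the coefficient of (a^dag)^k in A_n^dag v is the sum over m with m*n = k,
   i.e. the single term m = k/n when n | k (n >= 1). *)
Definition Adag (R : numFieldType) (n : nat) (v : nat -> R) : nat -> R :=
  fun k => if (n %| k)%N then
             v (k %/ n)%N * ((k %/ n)`!)%:R / ((((k %/ n) * n)`!)%:R)
           else 0.

(* <0| a^m A_n = <0| a^(mn), extended coefficientwise (right action). *)
Definition Abra (R : numFieldType) (n : nat) (w : nat -> R) : nat -> R :=
  fun k => if (n %| k)%N then w (k %/ n)%N else 0.

Definition mono_ket (R : numFieldType) (s : seq nat) (v : nat -> R) : nat -> R :=
  foldr (fun p u => Adag p u) v s.
Definition mono_bra (R : numFieldType) (s : seq nat) (w : nat -> R) : nat -> R :=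
  foldr (fun p u => Abra p u) w s.

(* Monomials of prod_p 1/(1-X_p) = sum over multisets of primes
   (represented as nondecreasing lists of primes), coefficient 1. *)
Definition prime_multiset (s : seq nat) : bool := sorted leq s && all prime s.
(* Monomials of prod_p (1-X_p) = sum over finite sets of primes
   (strictly increasing lists of primes), coefficient (-1)^|S|. *)
Definition prime_set (s : seq nat) : bool := sorted ltn s && all prime s.

Definition fin_sum (R : numFieldType) (I : eqType) (f : I -> R) (x : R) : Prop :=
  exists L : seq I, [/\ uniq L, (forall i, i \notin L -> f i = 0)
                      & x = \sum_(i <- L) f i].

Definition ket1 (R : numFieldType) : nat -> R := fun m => (m == 1%N)%:R.
Definition bra1 (R : numFieldType) : nat -> R := fun m => (m == 1%N)%:R.
Definition ket_exp (R : numFieldType) : nat -> R :=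
  fun n => if (1 <= n)%N then ((n`!)%:R)^-1 else 0.
Definition bra_geom (R : numFieldType) : nat -> R :=
  fun n => if (1 <= n)%N then 1 else 0.

(* Coefficient N of (prod_p 1/(1-A_p^dag)) v *)
Definition inv_prod_ket (R : numFieldType) (v : nat -> R) (N : nat) (s : seq nat) : R :=
  if prime_multiset s then mono_ket s v N else 0.
(* Coefficient N of (prod_p (1-A_p^dag)) v *)
Definition prod_ket (R : numFieldType) (v : nat -> R) (N : nat) (s : seq nat) : R :=
  if prime_set s then (-1) ^+ size s * mono_ket s v N else 0.
Definition inv_prod_bra (R : numFieldType) (w : nat -> R) (N : nat) (s : seq nat) : R :=
  if prime_multiset s then mono_bra s w N else 0.
Definition prod_bra (R : numFieldType) (w : nat -> R) (N : nat) (s : seq nat) : R :=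
  if prime_set s then (-1) ^+ size s * mono_bra s w N else 0.

(* Main.v *)
Require Import Defs.
From mathcomp Require Import all_boot all_order all_algebra.
Import Order.TTheory GRing.Theory Num.Theory.
Local Open Scope ring_scope.
Set Implicit Arguments. Unset Strict Implicit.

Definition prodn (s : seq nat) : nat := (\prod_(i <- s) i)%N.

Lemma prodn_cons p s : prodn (p :: s) = (p * prodn s)%N.
Proof. by rewrite /prodn big_cons. Qed.

Lemma prodn_gt0 s : all prime s -> (0 < prodn s)%N.
Proof.
elim: s => [|p s IH] /=; first by rewrite /prodn big_nil.
move=> /andP [pp ps].
rewrite prodn_cons muln_gt0 IH // andbT.
exact: prime_gt0.
Qed.

Lemma mem_prodn x s : x \in s -> (x %| prodn s)%N.
Proof.
elim: s => [|p s IH] //; rewrite in_cons prodn_cons => /orP[/eqP->|/IH h].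
  exact: dvdn_mulr.
exact: dvdn_mull.
Qed.

Lemma mem_prime_prod p s : prime p -> all prime s -> (p %| prodn s)%N -> p \in s.
Proof.
move=> pp; elim: s => [|q s IH] /=.
  by rewrite /prodn big_nil dvdn1 => _ /eqP p1; rewrite p1 in pp.
move=> /andP[pq ps]; rewrite prodn_cons Euclid_dvdM // dvdn_prime2 // in_cons.
by case/orP=> [->//|/IH ->]; rewrite ?orbT.
Qed.

Lemma prodn_dvd N t : uniq t -> all prime t -> (forall x, x \in t -> x %| N)%N ->
  (prodn t %| N)%N.
Proof.
elim: t => [|x t IH] /=; first by rewrite /prodn big_nil dvd1n.
move=> /andP[xt ut] /andP[px pt] H.
rewrite prodn_cons Gauss_dvd.
  rewrite H ?mem_head //= IH // => y yt; apply: H; by rewrite in_cons yt orbT.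
rewrite prime_coprime //; apply/negP => /mem_prime_prod h.
by move: xt; rewrite h.
Qed.

Lemma head_le (x y : nat) s : sorted leq (x :: s) -> y \in x :: s -> (x <= y)%N.
Proof.
move=> /= hs; rewrite in_cons => /orP[/eqP->//|ys].
by have /allP := order_path_min leq_trans hs; apply.
Qed.

Lemma fact_uniq s t : prime_multiset s -> prime_multiset t -> prodn s = prodn t -> s = t.
Proof.
rewrite /prime_multiset.
elim: s t => [|p s IH] [|q t] //=.
- move=> _ /andP[_ /andP[pq pt]]; rewrite prodn_cons /prodn big_nil => /esym/eqP.
  by rewrite muln_eq1 => /andP[/eqP q1]; rewrite q1 in pq.
- move=> /andP[_ /andP[pp ps]] _; rewrite prodn_cons /prodn big_nil => /eqP.
  by rewrite muln_eq1 => /andP[/eqP p1]; rewrite p1 in pp.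
move=> /andP[hs /andP[pp ps]] /andP[ht /andP[pq pt]] E.
have pin : p \in q :: t.
  apply: mem_prime_prod => //=; first by rewrite pq.
  by rewrite -E prodn_cons dvdn_mulr.
have qin : q \in p :: s.
  apply: mem_prime_prod => //=; first by rewrite pp.
  by rewrite E prodn_cons dvdn_mulr.
have epq : p = q.
  by apply/eqP; rewrite eqn_leq (head_le hs qin) (head_le ht pin).
subst q; congr (_ :: _); apply: IH.
- by rewrite (path_sorted hs).
- by rewrite (path_sorted ht).
by apply/eqP; rewrite -(eqn_pmul2l (prime_gt0 pp)) -!prodn_cons E.
Qed.

Lemma ex_fact N : (0 < N)%N -> exists l, all prime l /\ prodn l = N.
Proof.
elim/ltn_ind: N => N IH N0.
case: (ltngtP N 1) => [|N1|->].
- by rewrite ltnS leqn0 => /eqP N00; rewrite N00 in N0.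
- have pp := pdiv_prime N1.
  have dN := pdiv_dvd N.
  have lt : (N %/ pdiv N < N)%N by apply: ltn_Pdiv => //; exact: prime_gt1.
  have gt : (0 < N %/ pdiv N)%N by rewrite divn_gt0 ?prime_gt0 // dvdn_leq.
  have [l [pl el]] := IH _ lt gt.
  exists (pdiv N :: l); split; first by rewrite /= pp.
  by rewrite prodn_cons el mulnC divnK.
- by exists [::]; rewrite /prodn big_nil.
Qed.

Lemma ex_sfact N : (0 < N)%N -> exists s, prime_multiset s /\ prodn s = N.
Proof.
move=> /ex_fact [l [pl el]]; exists (sort leq l).
have hp : perm_eq (sort leq l) l by rewrite perm_sort perm_refl.
split.
  by rewrite /prime_multiset (sort_sorted leq_total) (perm_all _ hp).
by rewrite /prodn (perm_big _ hp).
Qed.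

Fixpoint pl (s : seq nat) : seq (seq nat) :=
  if s is x :: s' then pl s' ++ map (cons x) (pl s') else [:: [::]].

Lemma pl_sub s t : t \in pl s -> subseq t s.
Proof.
elim: s t => [|x s IH] t /=; first by rewrite inE => /eqP->.
rewrite mem_cat => /orP[/IH h|/mapP[t' /IH h ->]].
  exact: (subseq_trans h (subseq_cons s x)).
by rewrite /= eqxx.
Qed.

Lemma pl_uniq s : uniq s -> uniq (pl s).
Proof.
elim: s => [|x s IH] //= /andP[xs us].
rewrite cat_uniq IH //= map_inj_uniq ?IH //; last by move=> a b [].
rewrite andbT; apply/hasPn => t /mapP[t' _ ->]; apply/negP => /pl_sub /mem_subseq h.
by move: xs; rewrite h // mem_head.
Qed.

Lemma pl_complete s t : sorted ltn s -> sorted ltn t -> {subset t <= s} -> t \in pl s.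
Proof.
elim: s t => [|x s IH] t.
  by case: t => [|y t] //= _ _ H; have := H y (mem_head _ _).
move=> hs ht H /=; rewrite mem_cat.
have hs' := path_sorted hs.
have xmin := order_path_min ltn_trans hs.
case: t ht H => [|y t] ht H.
  by rewrite IH.
have ht' := path_sorted ht.
have ymin := order_path_min ltn_trans ht.
have sub' : forall z, z \in t -> z \in s -> z \in s by [].
case: (eqVneq y x) => [eyx|nyx].
  subst y; apply/orP; right; apply: map_f; apply: IH => // z zt.
  have := H z; rewrite !in_cons zt orbT => /(_ isT) /orP[/eqP zx|//].
  by move/allP: ymin => /(_ z zt); rewrite zx ltnn.
apply/orP; left; apply: IH => // z; rewrite in_cons => zt.
have ys : y \in s.
  by have := H y (mem_head _ _); rewrite in_cons (negbTE nyx).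
have xy : (x < y)%N by move/allP: xmin; apply.
have := H z; rewrite in_cons zt => /(_ isT); rewrite in_cons => /orP[/eqP zx|//].
case/orP: zt => [/eqP zy|zt]; first by move: nyx; rewrite -zy zx eqxx.
by move/allP: ymin => /(_ z zt); rewrite zx => /(ltn_trans xy); rewrite ltnn.
Qed.

Lemma pl_sum (R : numFieldType) s : \sum_(t <- pl s) (-1 : R) ^+ size t = (s == [::])%:R.
Proof.
elim: s => [|x s IH] /=; first by rewrite big_seq1 expr0.
rewrite big_cat big_map /= IH.
under eq_bigr do rewrite exprS.
by rewrite -mulr_sumr IH mulN1r subrr.
Qed.

Section Parts.
Variable R : numFieldType.

Lemma part_inv (g : seq nat -> R) (c : R) N :
  (forall s, prime_multiset s -> g s = if N == prodn s then c else 0) ->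
  fin_sum (fun s => if prime_multiset s then g s else 0) (if (0 < N)%N then c else 0).
Proof.
move=> Hg; case: (posnP N) => [N0|N0].
  exists [::]; split; [done| |by rewrite big_nil] => i _; case: ifP => // hi; rewrite Hg // N0.
  case: eqP => // E; move/andP: hi => [_ /prodn_gt0].
  by rewrite -E ltnn.
have [s0 [ps0 e0]] := ex_sfact N0.
exists [:: s0]; split => //.
  move=> i; rewrite inE => ni; case: ifP => // hi; rewrite Hg //.
  case: eqP => // E; exfalso; move/negP: ni; apply; apply/eqP.
  by apply: fact_uniq => //; rewrite e0.
by rewrite big_seq1 ps0 Hg // e0 eqxx.
Qed.

Lemma part_prod (g : seq nat -> R) (c : R) N :
  (forall s, prime_set s -> g s = if (prodn s %| N)%N && (0 < N)%N then c else 0) ->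
  fin_sum (fun s => if prime_set s then (-1) ^+ size s * g s else 0)
          (if N == 1%N then c else 0).
Proof.
move=> Hg; case: (posnP N) => [N0|N0].
  exists [::]. split. done. 2: by rewrite big_nil N0. move=> i _; case: ifP => // hi.
  by rewrite Hg // N0 andbF mulr0.
exists (pl (primes N)); split.
- exact/pl_uniq/primes_uniq.
- move=> i ni; case: ifP => // hi; rewrite Hg //.
  case: ifP; last by rewrite mulr0.
  move=> /andP[dv _]; exfalso; move/negP: ni; apply.
  move/andP: hi => [si pi].
  apply: pl_complete => //; first exact: sorted_primes.
  move=> x xi; rewrite mem_primes N0 (allP pi x xi) /=.
  exact: dvdn_trans (mem_prodn xi) dv.
- rewrite big_seq.
  under eq_bigr => t tin.
    have st := pl_sub tin.
    have ht : prime_set t.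
      rewrite /prime_set (subseq_sorted ltn_trans st (sorted_primes N)) /=.
      apply/allP => x /(mem_subseq st); by rewrite mem_primes => /andP[].
    rewrite ht Hg // N0 andbT prodn_dvd; first last.
    + by move=> x /(mem_subseq st); rewrite mem_primes => /and3P[].
    + by move: ht => /andP[].
    + exact: subseq_uniq st (primes_uniq N).
    over.
  rewrite -big_seq -mulr_suml pl_sum.
  case: (ltngtP N 1) => [|N1|->].
  + by rewrite ltnS leqn0 => /eqP N00; rewrite N00 in N0.
  + have : pdiv N \in primes N by rewrite mem_primes pdiv_prime // N0 pdiv_dvd.
    case E: (primes N) => [|a l]; first by rewrite in_nil.
    by move=> _; rewrite mul0r.
  + by rewrite /= mul1r.
Qed.

Lemma monoA N s : all prime s ->
  mono_ket s (@ket1 R) N = if N == prodn s then ((N`!)%:R)^-1 else 0.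
Proof.
elim: s N => [|p s IH] N /=.
  by rewrite /ket1 /prodn big_nil; case: eqP => // ->; rewrite invr1.
move=> /andP[pp ps]; rewrite /Adag prodn_cons.
have p0 := prime_gt0 pp.
case: ifP => [/dvdnP [m ->]|ndv].
  rewrite mulnK // IH // mulnC eqn_pmul2l //.
  case: eqP => _; last by rewrite !mul0r.
  by rewrite mulVf ?mul1r // pnatr_eq0 -lt0n fact_gt0.
case: eqP => // E; by rewrite E dvdn_mulr in ndv.
Qed.

Lemma monoB N s : all prime s ->
  mono_bra s (@bra1 R) N = (N == prodn s)%:R.
Proof.
elim: s N => [|p s IH] N /=.
  by rewrite /bra1 /prodn big_nil.
move=> /andP[pp ps]; rewrite /Abra prodn_cons.
have p0 := prime_gt0 pp.
case: ifP => [/dvdnP [m ->]|ndv].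
  by rewrite mulnK // IH // mulnC eqn_pmul2l.
case: eqP => // E; by rewrite E dvdn_mulr in ndv.
Qed.

Lemma monoC N s : all prime s ->
  mono_ket s (ket_exp R) N = if (prodn s %| N)%N && (0 < N)%N then ((N`!)%:R)^-1 else 0.
Proof.
elim: s N => [|p s IH] N /=.
  by rewrite /ket_exp /prodn big_nil dvd1n.
move=> /andP[pp ps]; rewrite /Adag prodn_cons.
have p0 := prime_gt0 pp.
case: ifP => [/dvdnP [m ->]|ndv].
  rewrite mulnK // IH // [(p * _)%N]mulnC dvdn_pmul2r // muln_gt0 p0 andbT.
  case: ifP => _; last by rewrite !mul0r.
  by rewrite mulVf ?mul1r // pnatr_eq0 -lt0n fact_gt0.
case: ifP => // /andP[dv _].
by move: ndv; rewrite (dvdn_trans (dvdn_mulr _ (dvdnn p)) dv).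
Qed.

Lemma monoD N s : all prime s ->
  mono_bra s (@bra_geom R) N = ((prodn s %| N)%N && (0 < N)%N)%:R.
Proof.
elim: s N => [|p s IH] N /=.
  by rewrite /bra_geom /prodn big_nil dvd1n; case: ifP.
move=> /andP[pp ps]; rewrite /Abra prodn_cons.
have p0 := prime_gt0 pp.
case: ifP => [/dvdnP [m ->]|ndv].
  by rewrite mulnK // IH // [(p * _)%N]mulnC dvdn_pmul2r // muln_gt0 p0 andbT.
have -> : (p * prodn s %| N)%N = false.
  by apply/negP => dv; move: ndv; rewrite (dvdn_trans (dvdn_mulr _ (dvdnn p)) dv).
by [].
Qed.

End Parts.

Theorem mainTheorem5 (R : numFieldType) :
  [/\ (forall N : nat, fin_sum (inv_prod_ket (@ket1 R) N) (ket_exp R N)),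
      (forall N : nat, fin_sum (prod_ket (@ket_exp R) N) (ket1 R N)),
      (forall N : nat, fin_sum (inv_prod_bra (@bra1 R) N) (bra_geom R N))
    & (forall N : nat, fin_sum (prod_bra (@bra_geom R) N) (bra1 R N))].
Proof.
split=> N.
- apply: (@part_inv R (fun s => mono_ket s (@ket1 R) N) ((N`!)%:R^-1) N).
  by move=> s /andP[_ ps]; rewrite monoA.
- have key : ket1 R N = if N == 1%N then ((N`!)%:R)^-1 else 0.
    rewrite /ket1; case: eqP => [->|//].
    by rewrite (_ : 1`! = 1)%N // mulr1n invr1.
  rewrite key; apply: (@part_prod R (fun s => mono_ket s (@ket_exp R) N)).
  by move=> s /andP[_ ps]; rewrite monoC.
- have key : bra_geom R N = if (0 < N)%N then 1 else 0 by [].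
  rewrite key; apply: (@part_inv R (fun s => mono_bra s (@bra1 R) N)).
  by move=> s /andP[_ ps]; rewrite monoB //; case: eqP.
- have key : bra1 R N = if N == 1%N then 1 else 0 by rewrite /bra1; case: eqP.
  rewrite key; apply: (@part_prod R (fun s => mono_bra s (@bra_geom R) N)).
  by move=> s /andP[_ ps]; rewrite monoD //; case: ifP.
Qed.
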